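(* Let $\mathfrak A\subseteq\mathcal B(\mathcal H)$ be a von Neumann algebra and $T\in\mathfrak A$. Let $E\in\mathfrak A$ be a projection such that $ETE-E$ is invertible in $E\mathfrak A E$. Then for every $A\in(I-E)\mathfrak A E$ there exists an idempotent $P\in\mathfrak A$ such that (1) $\mathcal K(P)=I-E$; (2) $\|P\|\le 1+\|TE\|+\|A\|(\|TE\|+1)$; (3) $\operatorname{Ran}((T-P)E)=\{\xi+A\xi:\ \xi\in E\mathcal H\}$.
   Context: For $S\in\mathcal B(\mathcal H)$, $\mathcal K(S)$ denotes the orthogonal projection onto $\ker S$, and $\operatorname{Ran}(S)=\{S\xi:\xi\in\mathcal H\}$. *)

(* Defs.v *)
From HB Require Import structures.
From mathcomp Require Import all_boot all_order all_algebra.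
From mathcomp Require Import complex.
From mathcomp Require Import boolp classical_sets reals.
Set Implicit Arguments. Unset Strict Implicit. Unset Printing Implicit Defensive.
Import Order.TTheory GRing.Theory Num.Theory.
Local Open Scope ring_scope.
Local Open Scope classical_set_scope.

Record hilbert (R : realType) (H : lmodType R[i]) := Hilbert {
  ip : H -> H -> R[i];
  ip_linl : forall (a : R[i]) (x y z : H), ip (a *: x + y) z = a * ip x z + ip y z;
  ip_conj : forall x y : H, ip y x = conjc (ip x y);
  ip_ge0 : forall x : H, 0 <= complex.Re (ip x x);
  ip_def : forall x : H, ip x x = 0 -> x = 0;
  ip_complete : forall u : nat -> H,
    (forall e : R, 0 < e -> exists N : nat, forall m n : nat, (N <= m)%N -> (N <= n)%N ->
        Num.sqrt (complex.Re (ip (u m - u n) (u m - u n))) < e) ->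
    exists l : H, forall e : R, 0 < e -> exists N : nat, forall n : nat, (N <= n)%N ->
        Num.sqrt (complex.Re (ip (u n - l) (u n - l))) < e
}.

Section Ops.
Variables (R : realType) (H : lmodType R[i]) (HS : hilbert H).

Definition hnorm (x : H) : R := Num.sqrt (complex.Re (ip HS x x)).

Definition bounded_op (S : H -> H) : Prop :=
  (forall (a : R[i]) (x y : H), S (a *: x + y) = a *: S x + S y) /\
  (exists M : R, forall x : H, hnorm (S x) <= M * hnorm x).

Definition opid : H -> H := fun x => x.
Definition opadd (S T : H -> H) : H -> H := fun x => S x + T x.
Definition opsub (S T : H -> H) : H -> H := fun x => S x - T x.
Definition opscale (a : R[i]) (S : H -> H) : H -> H := fun x => a *: S x.

Definition adjoint_of (S S' : H -> H) : Prop :=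
  forall x y : H, ip HS (S x) y = ip HS x (S' y).

Definition opnorm (S : H -> H) : R :=
  sup [set hnorm (S x) | x in [set x : H | hnorm x <= 1]].

Definition commutant (Alg : set (H -> H)) : set (H -> H) :=
  [set S | bounded_op S /\ forall X, Alg X -> S \o X = X \o S].

Definition von_neumann_algebra (Alg : set (H -> H)) : Prop :=
  (forall S, Alg S -> bounded_op S) /\
  Alg opid /\
  (forall S T, Alg S -> Alg T -> Alg (opadd S T)) /\
  (forall a S, Alg S -> Alg (opscale a S)) /\
  (forall S T, Alg S -> Alg T -> Alg (S \o T)) /\
  (forall S, Alg S -> exists S', Alg S' /\ adjoint_of S S') /\
  Alg = commutant (commutant Alg).

Definition is_projection (Q : H -> H) : Prop := Q \o Q = Q /\ adjoint_of Q Q.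

Definition kernel (S : H -> H) : set H := [set x | S x = 0].
Definition Ran (S : H -> H) : set H := [set S x | x in setT].

(* is_ker_proj S Q  <->  Q = K(S), the orthogonal projection onto ker S *)
Definition is_ker_proj (S Q : H -> H) : Prop :=
  is_projection Q /\ Ran Q = kernel S.

End Ops.

Arguments opid {R H}.

(* Main.v *)
Require Import Defs.
From HB Require Import structures.
From mathcomp Require Import all_boot all_order all_algebra.
From mathcomp Require Import complex.
From mathcomp Require Import boolp classical_sets reals.
From mathcomp Require Import lra ring.
Import Order.TTheory GRing.Theory Num.Theory.
Local Open Scope ring_scope.
Local Open Scope classical_set_scope.
Set Implicit Arguments. Unset Strict Implicit.

Section Aux.
Variable R : realType.
Lemma ReD_ (x y : R[i]) : complex.Re (x + y) = complex.Re x + complex.Re y.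
Proof. by case: x => a b; case: y => c d. Qed.
Lemma ReN_ (x : R[i]) : complex.Re (- x) = - complex.Re x.
Proof. by case: x => a b. Qed.
Lemma ReMr_ (r : R) (x : R[i]) : complex.Re ((r%:C)%C * x) = r * complex.Re x.
Proof. case: x => a b /=. by rewrite mul0r subr0. Qed.
Lemma ReJ_ (x : R[i]) : complex.Re (conjc x) = complex.Re x.
Proof. by case: x. Qed.
Lemma ImJ0_ (x : R[i]) : conjc x = x -> x = ((complex.Re x)%:C)%C.
Proof. case: x => a b /= [] h. congr (Complex _ _). lra. Qed.
Lemma conjD_ (x y : R[i]) : conjc (x + y) = conjc x + conjc y.
Proof. case: x => a b; case: y => c d /=. by rewrite opprD. Qed.
Lemma conjN_ (x : R[i]) : conjc (- x) = - conjc x.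
Proof. by case: x => a b. Qed.
Lemma conj0_ : conjc (0 : R[i]) = 0.
Proof. by rewrite /= oppr0. Qed.
Lemma realCM_ (a b : R) : ((a%:C)%C * (b%:C)%C) = ((a * b)%:C)%C.
Proof. rewrite /=. congr (Complex _ _); ring. Qed.
End Aux.

Lemma zm_ (V : zmodType) (u eu ex a : V) : u - (eu - ex + a) = u - eu + (ex - a).
Proof. rewrite opprD opprB addrA [u - eu + _]addrA. rewrite (addrA u ex (-eu)). rewrite (addrAC u ex (-eu)). done. Qed.

Section Hil.
Variables (R : realType) (H : lmodType R[i]) (HS : hilbert H).
Local Notation ip := (ip HS).
Definition rip (x y : H) : R := complex.Re (ip x y).

Lemma ip0l z : ip 0 z = 0.
Proof.
have := ip_linl HS 1 0 0 z; rewrite scaler0 addr0 mul1r => h.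
have := congr1 (fun t => t - ip 0 z) h; rewrite /= subrr addrK => <-. done.
Qed.
Lemma ipDl x y z : ip (x + y) z = ip x z + ip y z.
Proof. by have := ip_linl HS 1 x y z; rewrite scale1r mul1r. Qed.
Lemma ipZl a x z : ip (a *: x) z = a * ip x z.
Proof. by have := ip_linl HS a x 0 z; rewrite addr0 ip0l addr0. Qed.
Lemma ipNl x z : ip (- x) z = - ip x z.
Proof. by rewrite -scaleN1r ipZl mulN1r. Qed.
Lemma ipBl x y z : ip (x - y) z = ip x z - ip y z.
Proof. by rewrite ipDl ipNl. Qed.
Lemma ip0r z : ip z 0 = 0.
Proof. by rewrite ip_conj ip0l conj0_. Qed.
Lemma ipDr x y z : ip x (y + z) = ip x y + ip x z.
Proof. by rewrite ip_conj ipDl conjD_ -!ip_conj. Qed.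
Lemma ipNr x y : ip x (- y) = - ip x y.
Proof. by rewrite ip_conj ipNl conjN_ -!ip_conj. Qed.
Lemma ipBr x y z : ip x (y - z) = ip x y - ip x z.
Proof. by rewrite ipDr ipNr. Qed.

Lemma ripDl x y z : rip (x + y) z = rip x z + rip y z.
Proof. by rewrite /rip ipDl ReD_. Qed.
Lemma ripDr x y z : rip x (y + z) = rip x y + rip x z.
Proof. by rewrite /rip ipDr ReD_. Qed.
Lemma ripNl x z : rip (- x) z = - rip x z.
Proof. by rewrite /rip ipNl ReN_. Qed.
Lemma ripNr x z : rip x (- z) = - rip x z.
Proof. by rewrite /rip ipNr ReN_. Qed.
Lemma ripC x y : rip x y = rip y x.
Proof. by rewrite /rip (ip_conj HS x y) ReJ_. Qed.
Lemma ripZl (r : R) x z : rip ((r%:C)%C *: x) z = r * rip x z.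
Proof. by rewrite /rip ipZl ReMr_. Qed.
Lemma ripZr (r : R) x z : rip x ((r%:C)%C *: z) = r * rip x z.
Proof. by rewrite ripC ripZl ripC. Qed.
Lemma rip_ge0 x : 0 <= rip x x.
Proof. exact: ip_ge0. Qed.
Lemma rip0l z : rip 0 z = 0.
Proof. by rewrite /rip ip0l. Qed.

Lemma cs x y : rip x y ^+ 2 <= rip x x * rip y y.
Proof.
set a := rip x x; set b := rip x y; set c := rip y y.
have key t : 0 <= a + t * b + t * (b + t * c).
  have := rip_ge0 (x + (t%:C)%C *: y).
  rewrite ripDl !ripDr ripZr ripZl ripZr ripZl (ripC y x) -/a -/b -/c.
  by rewrite mulrDr addrA.
have c0 : 0 <= c by exact: rip_ge0.
have [cz|cp] := eqVneq c 0.
  have [bz|bn] := eqVneq b 0.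
    by rewrite bz cz expr0n /= mulr0.
  have := key (- (a + 1) / (2 * b)); rewrite cz !mulr0 addr0.
  have -> : a + - (a + 1) / (2 * b) * b + - (a + 1) / (2 * b) * b = -1.
    by field; rewrite ?mulf_neq0 ?pnatr_eq0 //=.
  by rewrite ler0N1.
have cpos : 0 < c by rewrite lt_def cp c0.
have := mulr_ge0 c0 (key (- b / c)).
have -> : c * (a + - b / c * b + - b / c * (b + - b / c * c)) = a * c - b ^+ 2.
  by field.
by rewrite subr_ge0.
Qed.

Lemma hnorm_ge0 x : 0 <= hnorm HS x.
Proof. exact: sqrtr_ge0. Qed.
Lemma hnorm0 : hnorm HS 0 = 0.
Proof. by rewrite /hnorm -/(rip 0 0) rip0l sqrtr0. Qed.

Lemma hnormD x y : hnorm HS (x + y) <= hnorm HS x + hnorm HS y.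
Proof.
rewrite /hnorm -!/(rip _ _).
have h0 := sqrtr_ge0 (rip x x); have h1 := sqrtr_ge0 (rip y y).
rewrite -(ger0_norm (addr_ge0 h0 h1)) -sqrtr_sqr ler_sqrt ?sqr_ge0 //.
rewrite ripDl !ripDr (ripC y x) sqrrD !sqr_sqrtr ?rip_ge0 //.
have : rip x y <= Num.sqrt (rip x x) * Num.sqrt (rip y y).
  rewrite -sqrtrM ?rip_ge0 //.
  apply: (le_trans (ler_norm _)).
  by rewrite -sqrtr_sqr ler_sqrt ?cs // mulr_ge0 ?rip_ge0.
move=> h. lra.
Qed.

Lemma hnormN x : hnorm HS (- x) = hnorm HS x.
Proof. by rewrite /hnorm -!/(rip _ _) ripNl ripNr opprK. Qed.

Lemma hnormB x y : hnorm HS (x - y) <= hnorm HS x + hnorm HS y.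
Proof. by rewrite -(hnormN y) hnormD. Qed.

Lemma hnormZ (r : R) x : hnorm HS ((r%:C)%C *: x) = `|r| * hnorm HS x.
Proof.
rewrite /hnorm -!/(rip _ _) ripZl ripZr mulrA -expr2 sqrtrM ?sqr_ge0 //.
by rewrite sqrtr_sqr.
Qed.

Lemma hnorm_eq0 x : hnorm HS x = 0 -> x = 0.
Proof.
move=> /eqP; rewrite sqrtr_eq0 => h.
have h2 : rip x x = 0 by apply/eqP; rewrite eq_le h rip_ge0.
apply: (@ip_def _ _ HS x).
rewrite (@ImJ0_ _ _ (esym (ip_conj HS x x))) -/(rip x x) h2. done.
Qed.

Definition lin (S : H -> H) := forall a x y, S (a *: x + y) = a *: S x + S y.

Lemma lin0 S : lin S -> S 0 = 0.
Proof.
move=> L; have := L 1 0 0; rewrite scaler0 addr0 scale1r => h.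
have := congr1 (fun t => t - S 0) h; rewrite /= subrr addrK => <-. done.
Qed.
Lemma linD S : lin S -> forall x y, S (x + y) = S x + S y.
Proof. by move=> L x y; have := L 1 x y; rewrite !scale1r. Qed.
Lemma linZ S : lin S -> forall a x, S (a *: x) = a *: S x.
Proof. by move=> L a x; have := L a x 0; rewrite !addr0 lin0 // addr0. Qed.
Lemma linN S : lin S -> forall x, S (- x) = - S x.
Proof. by move=> L x; rewrite -scaleN1r linZ // scaleN1r. Qed.
Lemma linB S : lin S -> forall x y, S (x - y) = S x - S y.
Proof. by move=> L x y; rewrite linD // linN. Qed.

Lemma opnorm_has_sup S : bounded_op HS S ->
  has_sup [set hnorm HS (S x) | x in [set x : H | hnorm HS x <= 1]].
Proof.
move=> [_ [M HM]]; split.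
  by exists (hnorm HS (S 0)); exists 0 => //=; rewrite hnorm0 ler01.
exists `|M| => _ [x /= hx <-].
have := HM x; have := hnorm_ge0 x; have := ler_norm M; have := normr_ge0 M.
move=> *; nra.
Qed.

Lemma opnorm_ub S x : bounded_op HS S -> hnorm HS x <= 1 ->
  hnorm HS (S x) <= opnorm HS S.
Proof.
move=> B hx; apply: (sup_upper_bound (opnorm_has_sup B)).
by exists x.
Qed.

Lemma opnorm_ge0 S : bounded_op HS S -> 0 <= opnorm HS S.
Proof.
move=> B; apply: (le_trans (hnorm_ge0 (S 0))); apply: (opnorm_ub B).
by rewrite hnorm0 ler01.
Qed.

Lemma opnorm_le S b : (forall x, hnorm HS x <= 1 -> hnorm HS (S x) <= b) ->
  opnorm HS S <= b.
Proof.
move=> hb; apply: ge_sup.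
  by exists (hnorm HS (S 0)); exists 0 => //=; rewrite hnorm0 ler01.
by move=> _ [x /= hx <-]; apply: hb.
Qed.

Lemma opnorm_mul S w : bounded_op HS S ->
  hnorm HS (S w) <= opnorm HS S * hnorm HS w.
Proof.
move=> B; have L : lin S by case: B.
have [nz|nn] := eqVneq (hnorm HS w) 0.
  by rewrite (hnorm_eq0 nz) lin0 // hnorm0 mulr0.
have np : 0 < hnorm HS w by rewrite lt_def nn hnorm_ge0.
set n := hnorm HS w in nn np *.
set v := ((n^-1)%:C)%C *: w.
have hv : hnorm HS v = 1.
  by rewrite /v hnormZ -/n ger0_norm ?invr_ge0 ?ltW // mulVf.
have wv : w = (n%:C)%C *: v.
  by rewrite /v scalerA realCM_ mulfV // scale1r.
rewrite wv linZ // hnormZ (ger0_norm (ltW np)) mulrC.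
have hS : hnorm HS (S v) <= opnorm HS S by apply: (opnorm_ub B); rewrite hv.
rewrite -[X in _ <= _ * X]/n. by rewrite ler_wpM2r // ltW.
Qed.

Lemma pyth u w : rip u w = 0 -> rip (u + w) (u + w) = rip u u + rip w w.
Proof.
move=> c; rewrite ripDl !ripDr c (ripC w u) c.
by rewrite addr0 add0r.
Qed.

Lemma proj_contr Q v : is_projection HS Q -> lin Q ->
  hnorm HS (Q v) <= hnorm HS v /\ hnorm HS (v - Q v) <= hnorm HS v.
Proof.
move=> [QQ Qa] L.
have QQx x : Q (Q x) = Q x by exact: (congr1 (fun f => f x) QQ).
have cross : rip (Q v) (v - Q v) = 0.
  by rewrite /rip Qa linB // QQx subrr ip0r.
have e : rip v v = rip (Q v) (Q v) + rip (v - Q v) (v - Q v).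
  by rewrite -pyth // addrC subrK.
rewrite /hnorm -!/(rip _ _) !ler_sqrt ?rip_ge0 // e.
have := rip_ge0 (Q v); have := rip_ge0 (v - Q v); move=> *; split; lra.
Qed.

End Hil.

Theorem proposition3p10 (R : realType) (H : lmodType R[i]) (HS : hilbert H)
  (Alg : set (H -> H)) (T E : H -> H) :
  von_neumann_algebra HS Alg -> Alg T -> Alg E -> is_projection HS E ->
  (* ETE - E is invertible in E Alg E (whose unit is E) *)
  (exists X, Alg X /\
     (E \o X \o E) \o opsub (E \o T \o E) E = E /\
     opsub (E \o T \o E) E \o (E \o X \o E) = E) ->
  forall A : H -> H,
  (* A in (I - E) Alg E *)
  (exists Y, Alg Y /\ A = opsub opid E \o Y \o E) ->
  exists P : H -> H,
    [/\ Alg P, P \o P = P,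
        is_ker_proj HS P (opsub opid E),
        opnorm HS P <= 1 + opnorm HS (T \o E)
                       + opnorm HS A * (opnorm HS (T \o E) + 1) &
        Ran (opsub T P \o E) = [set xi + A xi | xi in Ran E]].
Proof.
move=> [bnd [aid [aadd [ascal [acomp [_ _]]]]]] AT AE Ep [X [AX [_ inv]]] A [Y [AY Adef]].
have asub S U : Alg S -> Alg U -> Alg (opsub S U).
  move=> hS hU; have -> : opsub S U = opadd S (opscale (-1) U).
    by apply: funext => z; rewrite /opsub /opadd /opscale scaleN1r.
  by apply: (aadd) => //; apply: (ascal).
have linA S : Alg S -> lin S by move=> /bnd [].
have LE := linA _ AE; have LT := linA _ AT.
have AA : Alg A by rewrite Adef; apply: (acomp); [apply: (acomp); [apply: (asub)|]|].
have LA := linA _ AA.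
have EE x : E (E x) = E x by exact: (congr1 (fun f => f x) Ep.1).
have EA x : E (A x) = 0.
  by rewrite Adef /= /opsub /opid linB // EE subrr.
set W := opsub (E \o T \o E) E.
have AW : Alg W by apply: (asub) => //; apply: (acomp) => //; apply: (acomp).
have Winv xi : W (E (X (E xi))) = E xi.
  exact: (congr1 (fun f => f xi) inv).
have WE x : W (E x) = W x by rewrite /W /opsub /= !EE.
have EW x : E (W x) = W x by rewrite /W /opsub /= linB // !EE.
set P := opsub (T \o E) (opadd E A \o W).
have AP : Alg P.
  apply: (asub); first by apply: (acomp).
  by apply: (acomp) => //; apply: (aadd).
have LP := linA _ AP.
have Pdef x : P x = T (E x) - (W x + A (W x)) by rewrite /P /opsub /opadd /= EW.
have PE x : P (E x) = P x by rewrite !Pdef EE WE.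
have EP x : E (P x) = E x.
  rewrite Pdef linB // linD // EA addr0 EW /W /opsub /=.
  by rewrite opprB addrC subrK.
have PP : P \o P = P by apply: funext => x /=; rewrite -PE EP PE.
exists P; split => //.
- split.
    split.
      apply: funext => x; rewrite /opsub /opid /= linB // EE.
      by rewrite subrr subr0.
    move=> x y; rewrite /opsub /opid ipBl ipBr.
    by rewrite Ep.2.
  apply/seteqP; split => z /=.
    move=> [x _ <-]; rewrite /kernel /= /opsub /opid.
    by rewrite -PE linB // EE subrr lin0.
  rewrite /kernel /= => Pz.
  have Ez : E z = 0 by rewrite -EP Pz lin0.
  by exists z => //; rewrite /opsub /opid Ez subr0.
- have BTE : bounded_op HS (T \o E) by apply: (bnd); apply: (acomp).
  have BA : bounded_op HS A by apply: (bnd).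
  have oA0 := opnorm_ge0 BA.
  apply: opnorm_le => x hx.
  set u := T (E x).
  have hu : hnorm HS u <= opnorm HS (T \o E) by exact: (opnorm_ub BTE hx).
  have hWx : W x = E u - E x by [].
  have -> : P x = (u - E u) + (E x - A (W x)).
    by rewrite Pdef -/u hWx zm_.
  have [hEu hIu] := proj_contr u Ep LE.
  have [hEx _] := proj_contr x Ep LE.
  have hW : hnorm HS (W x) <= opnorm HS (T \o E) + 1.
    rewrite hWx; apply: le_trans (hnormB HS _ _) _; lra.
  have hAW := opnorm_mul (W x) BA.
  have hAW' : hnorm HS (A (W x)) <= opnorm HS A * (opnorm HS (T \o E) + 1).
    apply: le_trans hAW _; exact: ler_wpM2l.
  apply: le_trans (hnormD HS _ _) _.
  have := hnormB HS (E x) (A (W x)). lra.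
- apply/seteqP; split => z /=.
    move=> [x _ <-]; rewrite /opsub /=. rewrite PE Pdef.
    exists (W x); first by exists (W x).
    by rewrite opprD opprK addrA subrr add0r. 
  move=> [xi [w _ <-] <-].
  exists (E (X (E (E w)))) => //.
  rewrite /opsub /=. rewrite PE Pdef EE Winv EE.
  by rewrite opprD opprK addrA subrr add0r. 
Qed.
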